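(* Let $M_0=(S,\mathscr{C})$ be a matroid of finite rank which is non-Hamiltonian (in particular, $M_0$ may be the cycle matroid of a graph without Hamiltonian circuits). Then there exists a matroid $M$ and a nontrivial circuit injection $f:M_0\rightarrow M$.
   Context: A matroid is a pair $(S,\mathscr{C})$ with $S\neq\emptyset$ and $\mathscr{C}\subseteq 2^S$ (the circuits) satisfying: (I) $A,B\in\mathscr{C}$, $A\subseteq B$ implies $A=B$; (II) $A,B\in\mathscr{C}$, $a\in A\cap B$, $b\in (A\cup B)\setminus(A\cap B)$ implies there is $D\in\mathscr{C}$ with $D\subseteq A\cup B$, $a\notin D$, $b\in D$. The rank $r(M)$ is the usual matroid rank. $M$ is Hamiltonian if it has a circuit $A$ with $|A|=r(M)+1$. For matroids $M=(S,\mathscr{C})$, $M'=(S',\mathscr{C}')$, a circuit injection $f:M\rightarrow M'$ is a bijection $f:S\to S'$ with $f(A)\in\mathscr{C}'$ for every $A\in\mathscr{C}$; it is nontrivial if some $B\in\mathscr{C}'$ satisfies $B\neq f(A)$ for all $A\in\mathscr{C}$. *)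

(* Defs.v *)
(* Matroids given by circuit axioms on a (possibly infinite)
   ground set; the ground set S is the whole carrier type T. *)
From Stdlib Require Import List Arith.

Definition subset {T : Type} (A B : T -> Prop) : Prop := forall x, A x -> B x.

Definition has_card {T : Type} (A : T -> Prop) (n : nat) : Prop :=
  exists l : list T, NoDup l /\ length l = n /\ (forall x, A x <-> In x l).

Record matroid (T : Type) : Type := Matroid {
  circuit : (T -> Prop) -> Prop;
  ground_nonempty : inhabited T;
  circuit_antichain : forall A B, circuit A -> circuit B -> subset A B ->
      forall x, A x <-> B x;
  circuit_elim : forall A B a b, circuit A -> circuit B ->
      A a -> B a ->
      ((A b \/ B b) /\ ~ (A b /\ B b)) ->
      exists D, circuit D /\ subset D (fun x => A x \/ B x) /\ ~ D a /\ D b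
}.
Arguments circuit {T} m _.

Definition independent {T : Type} (M : matroid T) (I : T -> Prop) : Prop :=
  forall A, circuit M A -> ~ subset A I.

Definition is_rank {T : Type} (M : matroid T) (r : nat) : Prop :=
  (exists I, independent M I /\ has_card I r) /\
  (forall I n, independent M I -> has_card I n -> n <= r).

Definition finite_rank {T : Type} (M : matroid T) : Prop := exists r, is_rank M r.

Definition hamiltonian {T : Type} (M : matroid T) : Prop :=
  exists r, is_rank M r /\ exists A, circuit M A /\ has_card A (S r).

Definition image {T T' : Type} (f : T -> T') (A : T -> Prop) : T' -> Prop :=
  fun y => exists x, A x /\ f x = y.

Definition bijective {T T' : Type} (f : T -> T') : Prop :=
  (forall x y, f x = f y -> x = y) /\ (forall y, exists x, f x = y).

Definition circuit_injection {T T' : Type} (M : matroid T) (M' : matroid T')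
    (f : T -> T') : Prop :=
  bijective f /\ forall A, circuit M A -> circuit M' (image f A).

Definition nontrivial_ci {T T' : Type} (M : matroid T) (M' : matroid T')
    (f : T -> T') : Prop :=
  circuit_injection M M' f /\
  exists B, circuit M' B /\
    forall A, circuit M A -> ~ (forall y, B y <-> image f A y).

(* Main.v *)
Require Import Defs.
From Stdlib Require Import List Arith Lia Classical ClassicalEpsilon FunctionalExtensionality PropExtensionality.

Section S.
Variable T : Type.
Variable M0 : matroid T.
Variable r : nat.
Hypothesis Hr : is_rank M0 r.

Definition eqdec : forall x y : T, {x = y} + {x <> y} :=
  fun x y => excluded_middle_informative (x = y).

Lemma indep_sub I J : independent M0 I -> subset J I -> independent M0 J.
Proof. intros HI HJ A HA HAJ; apply (HI A HA); intros x Hx; apply HJ, HAJ, Hx. Qed.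

Lemma bound I n : independent M0 I -> has_card I n -> n <= r.
Proof. intros; destruct Hr as [_ H2]; eauto. Qed.

Lemma card_add (B : T -> Prop) n x : has_card B n -> ~ B x -> has_card (fun y => B y \/ y = x) (S n).
Proof.
  intros [l [Hnd [Hl Hin]]] Hx. exists (x :: l). split; [|split].
  - constructor; auto. intros H; apply Hx, Hin, H.
  - simpl; auto.
  - intros y; simpl; rewrite <- Hin; split; intros [H|H]; auto.
Qed.

Lemma card_exch (B : T -> Prop) n a x : has_card B n -> B a -> ~ B x ->
  has_card (fun y => (B y /\ y <> a) \/ y = x) n.
Proof.
  intros [l [Hnd [Hl Hin]]] Ha Hx.
  assert (Hal : In a l) by (apply Hin; auto).
  destruct (in_split _ _ Hal) as [l1 [l2 ->]].
  exists (x :: l1 ++ l2). split; [|split].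
  - constructor.
    + intros H; apply Hx, Hin. apply in_app_or in H; apply in_or_app; simpl; tauto.
    + eapply NoDup_remove_1; eauto.
  - simpl. rewrite length_app in *; simpl in *; lia.
  - intros y; simpl. split.
    + intros [[By Hya]| ->]; auto. right. apply Hin in By.
      apply in_app_or in By; apply in_or_app; simpl in *; destruct By as [H|[H|H]]; auto; subst; contradiction.
    + intros [->|H]; auto. left. split.
      * apply Hin. apply in_app_or in H; apply in_or_app; simpl; tauto.
      * intros ->. eapply NoDup_remove_2; eauto.
Qed.

Lemma L_dep X : ~ independent M0 X -> exists C, circuit M0 C /\ subset C X.
Proof.
  intros H. unfold independent in H. apply not_all_ex_not in H as [C HC].
  exists C. apply imply_to_and in HC as [HC1 HC2]. split; auto. apply NNPP; auto.
Qed.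

Lemma maximal B x : independent M0 B -> has_card B r -> ~ B x ->
  ~ independent M0 (fun y => B y \/ y = x).
Proof. intros HB Hc Hx Hi. pose proof (bound _ _ Hi (card_add _ _ _ Hc Hx)); lia. Qed.

Lemma circ_in_add B x : independent M0 B -> ~ independent M0 (fun y => B y \/ y = x) ->
  exists K, circuit M0 K /\ subset K (fun y => B y \/ y = x) /\ K x.
Proof.
  intros HB Hd. destruct (L_dep _ Hd) as [K [HK Hs]]. exists K; repeat split; auto.
  apply NNPP; intros nK. apply (HB K HK). intros y Ky.
  destruct (Hs y Ky) as [H|H]; auto. subst; contradiction.
Qed.

Lemma circ_minus C a : circuit M0 C -> C a -> independent M0 (fun y => C y /\ y <> a).
Proof.
  intros HC Ca A HA Hs.
  assert (HAC : subset A C) by (intros y Hy; apply Hs; auto).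
  pose proof (circuit_antichain _ M0 A C HA HC HAC a) as H.
  apply H in Ca. apply (Hs a Ca); auto.
Qed.

Lemma L_fin I : independent M0 I -> exists l, forall x, I x -> In x l.
Proof.
  intros HI.
  assert (forall n l, NoDup l -> (forall x, In x l -> I x) -> r - length l <= n ->
     exists l', forall x, I x -> In x l').
  { induction n; intros l Hnd Hin Hle;
    (destruct (classic (forall x, I x -> In x l)) as [H|H]; [eauto|]);
    apply not_all_ex_not in H; destruct H as [x Hx]; apply imply_to_and in Hx;
    destruct Hx as [Ix nIn].
    - exfalso. assert (length (x :: l) <= r).
      { apply (bound (fun y => In y (x :: l))).
        - apply (indep_sub I); auto. intros y [->|Hy]; auto.
        - exists (x :: l); split; [constructor; auto|split; [reflexivity| tauto]]. }
      simpl in H; lia.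
    - apply (IHn (x :: l)).
      + constructor; auto.
      + intros y [->|Hy]; auto.
      + simpl; lia. }
  apply (H r nil); simpl; [constructor| tauto | lia].
Qed.

Definition trunc_circ (X : T -> Prop) : Prop :=
  circuit M0 X \/ (independent M0 X /\ has_card X r).

Hypothesis Hnh : ~ hamiltonian M0.

Lemma card_ext (A B : T -> Prop) n : has_card A n -> (forall x, A x <-> B x) -> has_card B n.
Proof. intros [l [H1 [H2 H3]]] H; exists l; split; [auto|split; [auto|]]; intros y; rewrite <- H3; apply iff_sym, H. Qed.

Lemma tr_antichain : forall A B, trunc_circ A -> trunc_circ B -> subset A B ->
  forall x, A x <-> B x.
Proof.
  intros A B [HA|[HA HAc]] [HB|[HB HBc]] Hsub.
  - exact (circuit_antichain _ M0 A B HA HB Hsub).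
  - exfalso; exact (HB A HA Hsub).
  - exfalso. destruct (classic (subset B A)) as [HBA|HBA]. exact (HA B HB HBA).
    unfold subset in HBA; apply not_all_ex_not in HBA as [x Hx];
    apply imply_to_and in Hx as [Bx nAx].
    pose proof (card_add _ _ _ HAc nAx) as Hc.
    destruct (classic (independent M0 (fun y => A y \/ y = x))) as [Hi|Hi].
    + pose proof (bound _ _ Hi Hc); lia.
    + destruct (L_dep _ Hi) as [C' [HC' HC's]].
      assert (Heq : forall y, C' y <-> B y).
      { apply (circuit_antichain _ M0 C' B HC' HB). intros y Hy.
        destruct (HC's y Hy) as [Ay| ->]; auto. }
      apply Hnh. exists r; split; auto. exists B; split; auto.
      apply (card_ext _ _ _ Hc). intros y; split.
      * intros [Ay| ->]; auto.
      * intros By. apply HC's, Heq, By.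
  - intros x; split; [apply Hsub|]. intros Bx. destruct (classic (A x)) as [|nA]; auto.
    exfalso. pose proof (card_add _ _ _ HAc nA) as Hc.
    assert (Hi : independent M0 (fun y => A y \/ y = x)).
    { apply (indep_sub B); auto. intros y [Ay| ->]; auto. }
    pose proof (bound _ _ Hi Hc); lia.
Qed.

Lemma exch B a b : independent M0 B -> has_card B r -> B a -> ~ B b ->
  exists D, trunc_circ D /\ subset D (fun y => (B y /\ y <> a) \/ y = b) /\ ~ D a /\ D b.
Proof.
  intros HB Hc Ba nBb.
  set (X := fun y => (B y /\ y <> a) \/ y = b).
  assert (nXa : ~ X a).
  { intros [[_ H]|H]; [apply H; auto| subst; contradiction]. }
  destruct (classic (independent M0 X)) as [Hi|Hi].
  - exists X. split; [right; split; auto; apply card_exch; auto|].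
    split; [intros y; auto|]. split; auto. right; reflexivity.
  - destruct (L_dep _ Hi) as [C' [HC' Hs]]. exists C'. split; [left; auto|].
    split; auto. split; [intros H; apply nXa, Hs, H|].
    apply NNPP; intros nC. apply (HB C' HC'). intros y Cy.
    destruct (Hs y Cy) as [[H _]|H]; auto. subst; contradiction.
Qed.

Lemma Fstep B a C : independent M0 B -> has_card B r -> B a -> circuit M0 C -> C a ->
  (exists c K, C c /\ ~ B c /\ circuit M0 K /\ subset K (fun y => B y \/ y = c) /\ K a /\ K c) \/
  (exists c D, C c /\ ~ B c /\ circuit M0 D /\ D a /\ subset D (fun y => (C y \/ B y) /\ y <> c)).
Proof.
  intros HB Hc Ba HC Ca.
  assert (exists c, C c /\ ~ B c) as [c [Cc nBc]].
  { apply NNPP; intros H. apply (HB C HC). intros y Cy. apply NNPP; intros nB.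
    apply H; eauto. }
  destruct (circ_in_add B c HB (maximal B c HB Hc nBc)) as [K0 [HK0 [HK0s K0c]]].
  destruct (classic (K0 a)) as [K0a|nK0a].
  - left; exists c, K0; repeat split; auto.
  - right. destruct (circuit_elim _ M0 C K0 c a HC HK0 Cc K0c) as [D [HD [HDs [nDc Da]]]].
    { split; auto. tauto. }
    exists c, D; split; [auto|split; [auto|split; [auto|split; [auto|]]]].
    intros y Dy. split.
      + destruct (HDs y Dy) as [H|H]; auto. destruct (HK0s y H) as [H'|H']; auto.
        subst; contradiction.
      + intros ->; contradiction.
Qed.

Lemma Flem B a : independent M0 B -> has_card B r -> B a -> forall n C l,
  circuit M0 C -> C a -> (forall x, C x -> ~ B x -> In x l) -> length l <= n ->
  exists c K, C c /\ ~ B c /\ circuit M0 K /\ subset K (fun y => B y \/ y = c) /\ K a /\ K c.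
Proof.
  intros HB Hc Ba n. induction n; intros C l HC Ca Hl Hlen;
  (destruct (Fstep B a C HB Hc Ba HC Ca) as [H|[c [D [Cc [nBc [HD [Da HDs]]]]]]]; auto);
  pose proof (Hl c Cc nBc) as Hcl.
  - destruct l; simpl in *; [contradiction|lia].
  - destruct (IHn D (remove eqdec c l) HD Da) as [c' [K [Dc' [nBc' HK]]]].
    + intros x Dx nBx. destruct (HDs x Dx) as [[Cx|Bx] Hxc]; [|contradiction].
      apply in_in_remove; auto.
    + pose proof (remove_length_lt eqdec l c Hcl); lia.
    + exists c', K; split; auto. destruct (HDs c' Dc') as [[H|H] _]; auto; contradiction.
Qed.

Lemma hard B C a b : independent M0 B -> has_card B r -> circuit M0 C -> C a -> B a ->
  B b -> ~ C b ->
  exists D, trunc_circ D /\ subset D (fun y => C y \/ B y) /\ ~ D a /\ D b.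
Proof.
  intros HB Hc HC Ca Ba Bb nCb.
  destruct (L_fin _ (circ_minus C a HC Ca)) as [l0 Hl0].
  destruct (Flem B a HB Hc Ba (length l0) C l0 HC Ca) as [c [K [Cc [nBc [HK [HKs [Ka Kc]]]]]]];
    auto.
  { intros x Cx nBx. apply Hl0. split; auto. intros ->; contradiction. }
  assert (Hac : a <> c) by (intros ->; contradiction).
  set (X := fun y => (B y /\ y <> a) \/ y = c).
  assert (Hi : independent M0 X).
  { intros C' HC' Hs. destruct (classic (C' c)) as [C'c|nC'c].
    - destruct (circuit_elim _ M0 C' K c a HC' HK C'c Kc) as [D [HD [HDs [nDc Da]]]].
      { split; auto. intros [H _]. destruct (Hs a H) as [[_ H']|H']; auto. }
      apply (HB D HD). intros y Dy.
      assert (Hyc : y <> c) by (intros ->; contradiction).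
      destruct (HDs y Dy) as [H|H].
      + destruct (Hs y H) as [[H' _]|H']; auto; contradiction.
      + destruct (HKs y H) as [H'|H']; auto; contradiction.
    - apply (HB C' HC'). intros y Cy. destruct (Hs y Cy) as [[H _]|H]; auto.
      subst; contradiction. }
  exists X. split; [right; split; auto; apply card_exch; auto|].
  split; [intros y [[H _]|H]; auto; subst; auto|].
  split.
  - intros [[_ H]|H]; auto.
  - left; split; auto. intros ->; contradiction.
Qed.

Lemma tr_elim : forall A B a b, trunc_circ A -> trunc_circ B -> A a -> B a ->
  ((A b \/ B b) /\ ~ (A b /\ B b)) ->
  exists D, trunc_circ D /\ subset D (fun x => A x \/ B x) /\ ~ D a /\ D b.
Proof.
  intros A B a b HA HB Aa Ba [Hor Hnand].
  destruct HA as [HA|[HAi HAc]]; destruct HB as [HB|[HBi HBc]].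
  - destruct (circuit_elim _ M0 A B a b HA HB Aa Ba (conj Hor Hnand)) as [D [? [? [? ?]]]].
    exists D; split; [left|]; auto.
  - destruct Hor as [Ab|Bb].
    + destruct (exch B a b HBi HBc Ba (fun H => Hnand (conj Ab H))) as [D [HD [Hs [? ?]]]].
      exists D; repeat split; auto. intros y Dy. destruct (Hs y Dy) as [[]|]; subst; auto.
    + apply hard; auto.
  - destruct Hor as [Ab|Bb].
    + destruct (hard A B a b HAi HAc HB Ba Aa Ab (fun H => Hnand (conj Ab H))) as [D [HD [Hs [? ?]]]].
      exists D; repeat split; auto. intros y Dy. destruct (Hs y Dy); auto.
    + destruct (exch A a b HAi HAc Aa (fun H => Hnand (conj H Bb))) as [D [HD [Hs [? ?]]]].
      exists D; repeat split; auto. intros y Dy. destruct (Hs y Dy) as [[]|]; subst; auto.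
  - destruct Hor as [Ab|Bb].
    + destruct (exch B a b HBi HBc Ba (fun H => Hnand (conj Ab H))) as [D [HD [Hs [? ?]]]].
      exists D; repeat split; auto. intros y Dy. destruct (Hs y Dy) as [[]|]; subst; auto.
    + destruct (exch A a b HAi HAc Aa (fun H => Hnand (conj H Bb))) as [D [HD [Hs [? ?]]]].
      exists D; repeat split; auto. intros y Dy. destruct (Hs y Dy) as [[]|]; subst; auto.
Qed.

End S.

Theorem theorem2p1 (T : Type) (M0 : matroid T) :
  finite_rank M0 -> ~ hamiltonian M0 ->
  exists (T' : Type) (M : matroid T') (f : T -> T'), nontrivial_ci M0 M f.
Proof.
  intros [r Hr] Hnh.
  exists T, (Matroid T (trunc_circ T M0 r) (ground_nonempty T M0)
                (tr_antichain T M0 r Hr Hnh) (tr_elim T M0 r Hr)), (fun x => x).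
  split; [split|].
  - split; auto. intros y; exists y; auto.
  - intros A HA. simpl.
    replace (image (fun x => x) A) with A.
    + left; auto.
    + extensionality y; apply propositional_extensionality; unfold image; split.
      * intros; exists y; auto.
      * intros [x [Ax <-]]; auto.
  - destruct (proj1 Hr) as [B [HBi HBc]]. exists B. split.
    + simpl; right; auto.
    + intros A HA Heq. apply (HBi A HA). intros x Ax. apply Heq. exists x; auto.
Qed.
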